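(* Let $G=\langle N,S,P\rangle$ and $G'=\langle N',S',P'\rangle$ be normal-form games with $G\sqsubseteq G'$. Let $i\in N$, and let $\sigma,\sigma'$ be mixed strategy profiles of $G,G'$ respectively with $\sigma\sim\sigma'$. Then $h_i(\sigma)=h'_i(\sigma')$, where $h_i,h'_i$ are the payoff functions of player $i$ in $G,G'$.
   Context: A normal-form game $G=\langle N,S,P\rangle$ has a finite set of players $N$, for each $i\in N$ a finite set of pure strategies $S_i$, $S=\times_{i\in N}S_i$, and payoffs $P_i:S\to\mathbb{R}$. A mixed strategy profile $\sigma=(\sigma_i)_{i\in N}$ assigns to each $i$ a probability distribution $\sigma_i=(\sigma_{ij})_{j\in S_i}$ on $S_i$; the payoff of $i$ is $h_i(\sigma)=\sum_{s\in S}P_i(s)\prod_{k\in N}\sigma_{k,s_k}$. $NE(G)$ is the set of mixed Nash equilibria. For games $G=\langle N,S,P\rangle$, $G'=\langle N',S',P'\rangle$ and profiles $\sigma$ of $G$, $\sigma'$ of $G'$, $\sigma\sim\sigma'$ (compatible) iff $\sigma_{ij}=\sigma'_{ij}$ for all $i\in N\cap N'$ and $j\in S_i\cap S'_i$. $G'$ is an inflated version of $G$, written $G\sqsubseteq G'$, iff: $N\subseteq N'$; $S_i\subseteq S'_i$ for all $i\in N$; $P_i(s)=P'_i(s')$ whenever $i\in N$, $s\in S$, $s'\in S'$ and $s_j=s'_j$ for all $j\in N$; for every $\sigma\in NE(G)$ there is $\sigma'\in NE(G')$ with $\sigma\sim\sigma'$; and for every $\sigma'\in NE(G')$ there is $\sigma\in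 NE(G)$ with $\sigma\sim\sigma'$. *)

(* Defs.v *)
From HB Require Import structures.
From mathcomp Require Import all_boot all_order all_algebra.
Set Implicit Arguments. Unset Strict Implicit. Unset Printing Implicit Defensive.
Import Order.TTheory GRing.Theory Num.Theory.
Local Open Scope ring_scope.

(* Ambient universes: a finite type [I] of potential players, and for each
   player a finite type [A i] of potential pure strategies.  A game picks a
   finite set of players [N] and strategy sets [S i]; this lets us speak of
   N ⊆ N', S_i ⊆ S'_i and of compatibility of profiles of different games. *)
Section Games.
Variables (R : realFieldType) (I : finType) (A : I -> finType).

Definition pprofile (N : {set I}) (S : forall i, {set A i}) :=
  {dffun forall k : {k : I | k \in N}, {x : A (val k) | x \in S (val k)}}.

Record game := Game {
  players : {set I};
  strats : forall i, {set A i};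
  (* payoff i s = P_i(s); only meaningful for i in players *)
  payoff : I -> pprofile players strats -> R }.
Arguments payoff : clear implicits.
Arguments players : clear implicits.
Arguments strats : clear implicits.

(* a (candidate) mixed profile: sigma i j = sigma_{ij}; only the values for
   i in N and j in S_i are meaningful *)
Definition mprofile := forall i, A i -> R.

Definition is_mixed (G : game) (sigma : mprofile) : Prop :=
  forall i, i \in players G ->
    (forall j, j \in strats G i -> 0 <= sigma i j) /\
    \sum_(j in strats G i) sigma i j = 1.

Definition exp_payoff (G : game) (i : I) (sigma : mprofile) : R :=
  \sum_(s : pprofile (players G) (strats G))
     payoff G i s * \prod_(k : {k : I | k \in players G}) sigma (val k) (val (s k)).

Definition is_NE (G : game) (sigma : mprofile) : Prop :=
  is_mixed G sigma /\
  forall i, i \in players G -> forall tau : mprofile, is_mixed G tau ->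
    (forall k, k != i -> tau k = sigma k) ->
    exp_payoff G i tau <= exp_payoff G i sigma.

Definition compatible (G G' : game) (sigma sigma' : mprofile) : Prop :=
  forall i, i \in players G -> i \in players G' ->
  forall j, j \in strats G i -> j \in strats G' i -> sigma i j = sigma' i j.

Definition inflated (G G' : game) : Prop :=
  [/\ players G \subset players G',
      (forall i, i \in players G -> strats G i \subset strats G' i),
      (forall i, i \in players G ->
        forall (s : pprofile (players G) (strats G))
               (s' : pprofile (players G') (strats G')),
        (forall (j : I) (hj : j \in players G) (hj' : j \in players G'),
            val (s (exist _ j hj)) = val (s' (exist _ j hj'))) ->
        payoff G i s = payoff G' i s'),
      (forall sigma, is_NE G sigma ->
         exists2 sigma', is_NE G' sigma' & compatible G G' sigma sigma') &
      (forall sigma', is_NE G' sigma' ->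
         exists2 sigma, is_NE G sigma & compatible G G' sigma sigma')].

End Games.

(* Main.v *)
Require Import Defs.
From HB Require Import structures.
From mathcomp Require Import all_boot all_order all_algebra.
Set Implicit Arguments. Unset Strict Implicit.
Import Order.TTheory GRing.Theory Num.Theory.
Local Open Scope ring_scope.
Definition ind (R : realFieldType) (I : finType) (A : I -> finType) (G : game R A)
  (s : pprofile (players G) (strats G)) (j : I) (x : A j) : bool :=
  if (insub j : option {k : I | k \in players G}) is Some kk
  then Tagged A x == Tagged A (val (s kk)) else true.
Arguments ind [R I A G] s j x.

Lemma mk_prof (R : realFieldType) (I : finType) (A : I -> finType) (G G' : game R A)
  (subN : players G \subset players G')
  (s' : pprofile (players G') (strats G'))
  (H : forall k : {k : I | k \in players G'}, val k \in players G -> val (s' k) \in strats G (val k)) :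
  pprofile (players G) (strats G).
Proof.
exact: (finfun (fun kk : {k : I | k \in players G} =>
   exist (fun x => x \in strats G (val kk)) (val (s' (exist _ (val kk) (subsetP subN _ (valP kk)))))
     (H (exist _ (val kk) (subsetP subN _ (valP kk))) (valP kk)))).
Defined.
Lemma dprod_sum (R : comNzRingType) (K : finType) (B : K -> finType)
  (f : forall k, B k -> R) :
  \sum_(g : {dffun forall k, B k}) \prod_k f k (g k) =
  \prod_k \sum_(x : B k) f k x.
Proof.
have -> : \prod_k \sum_(x : B k) f k x =
   \prod_k \sum_(j in tagged_with B k) untag 0 ([ffun x => f k x]) j.
  apply: eq_bigr => k _.
  have := (big_tag (fun k => [ffun x => f k x] : B k -> R) k).
  move=> <-; by apply: eq_bigr => x _; rewrite ffunE.
rewrite bigA_distr_big_dep.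
rewrite -(@big_fprod R 0 1 *%R +%R K B (fun k => [ffun x => f k x])).
rewrite (reindex (@fprod_of_dffun K B)); last exact/onW_bij/fprod_of_dffun_bij.
apply: eq_bigr => g _; apply: eq_bigr => k _.
by rewrite ffunE fprodE.
Qed.

Theorem proposition1 (R : realFieldType) (I : finType) (A : I -> finType)
    (G G' : game R A) (i : I) (sigma sigma' : mprofile R A) :
  inflated G G' -> i \in players G ->
  is_mixed G sigma -> is_mixed G' sigma' -> compatible G G' sigma sigma' ->
  exp_payoff G i sigma = exp_payoff G' i sigma'.
Proof.
case=> subN subS payE _ _ iN mix mix' comp.
have zero : forall j x, j \in players G -> x \in strats G' j -> x \notin strats G j ->
    sigma' j x = 0.
  move=> j x jN xS' xS.
  have jN' : j \in players G' by apply: (subsetP subN).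
  have [pos' sum'] := mix' j jN'.
  have [_ sum] := mix j jN.
  have e : \sum_(y in strats G j) sigma' j y = 1.
    rewrite -sum; apply: eq_bigr => y yS; symmetry; apply: comp => //.
    exact: (subsetP (subS j jN)).
  have h0 : \sum_(y in strats G' j | y \notin strats G j) sigma' j y = 0.
    move: sum'; rewrite (bigID (fun y => y \in strats G j)) /=.
    have -> : \sum_(y in strats G' j | y \in strats G j) sigma' j y =
              \sum_(y in strats G j) sigma' j y.
      apply: eq_bigl => y; rewrite andb_idl // => yS; exact: (subsetP (subS j jN)).
    by rewrite e => /(congr1 (fun z => z - 1)); rewrite addrC addrK subrr.
  apply: (psumr_eq0P _ h0); first by move=> y /andP [yS' _]; exact: pos'.
  by rewrite xS' xS.
pose agree (s : pprofile (players G) (strats G)) (s' : pprofile (players G') (strats G')) :=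
  [forall k : {k : I | k \in players G'}, ind s (val k) (val (s' k))].
have agreeP : forall s s', agree s s' -> forall j (hj : j \in players G) (hj' : j \in players G'),
    val (s (exist _ j hj)) = val (s' (exist _ j hj')).
  move=> s s' /forallP ag j hj hj'; move: (ag (exist _ j hj')); rewrite /ind /=.
  rewrite (insubT (fun k => k \in players G) hj) /=.
  by rewrite eq_Tagged /= => /eqP.
pose W' (s' : pprofile (players G') (strats G')) :=
  \prod_(k : {k : I | k \in players G'}) sigma' (val k) (val (s' k)).
have indprod : forall (s : pprofile (players G) (strats G)) (s' : pprofile (players G') (strats G')), \prod_(k : {k : I | k \in players G'}) (ind s (val k) (val (s' k)))%:R
    = (agree s s')%:R :> R.
  move=> s s'; case: (boolP (agree s s')) => [/forallP h | ].
    by rewrite big1 // => k _; rewrite h.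
  rewrite negb_forall => /existsP [k hk].
  by rewrite (bigD1 k) //= (negbTE hk) mul0r.
have point : forall s' : pprofile (players G') (strats G'), payoff i s' * W' s' =
    \sum_(s : pprofile (players G) (strats G)) payoff i s * (W' s' * (agree s s')%:R).
  move=> s'; case: (pickP (fun s => agree s s')) => [s0 ag0 | none].
    have uniq : forall s, agree s s' -> s = s0.
      move=> s ag; apply/ffunP => -[j hj]; apply: val_inj.
      have hj' := subsetP subN j hj.
      by rewrite (agreeP _ _ ag j hj hj') (agreeP _ _ ag0 j hj hj').
    rewrite (bigD1 s0) //= ag0 big1 ?addr0.
      rewrite mulr1; congr (_ * _); symmetry; apply: payE => //.
      exact: agreeP.
    move=> s ns; case: (boolP (agree s s')) => ag; last by rewrite mulr0 mulr0.
    by rewrite (uniq s ag) eqxx in ns.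
  rewrite big1; last by move=> s _; rewrite none mulr0 mulr0.
  case: (boolP [forall k : {k : I | k \in players G'},
      (val k \in players G) ==> (val (s' k) \in strats G (val k))]) => [/forallP H | ].
    have H' : forall k : {k : I | k \in players G'}, val k \in players G ->
        val (s' k) \in strats G (val k) by move=> k; apply/implyP; exact: H.
    have := none (mk_prof subN H'); suff -> : agree (mk_prof subN H') s' by [].
    apply/forallP => -[j hj'] /=; rewrite /ind.
    case: insubP => [[j2 hj2] _ /= e | //]; subst j2.
    rewrite /mk_prof ffunE /=; apply/eqP.
    by rewrite (bool_irrelevance (subsetP subN j _) hj').
  rewrite negb_forall => /existsP [k]; rewrite negb_imply => /andP [kN ks].
  by rewrite /W' (bigD1 k) //= (zero _ _ kN (valP (s' k)) ks) mul0r mulr0.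
rewrite /exp_payoff.
have -> : \sum_(s' : pprofile (players G') (strats G'))
   payoff i s' * \prod_(k : {k : I | k \in players G'}) sigma' (val k) (val (s' k)) =
   \sum_(s' : pprofile (players G') (strats G')) payoff i s' * W' s' by [].
rewrite (eq_bigr _ (fun s' _ => point s')) exchange_big /=.
apply: eq_bigr => s _.
rewrite -mulr_sumr; congr (_ * _).
have -> : \sum_(s' : pprofile (players G') (strats G')) W' s' * (agree s s')%:R =
   \sum_(s' : pprofile (players G') (strats G')) \prod_(k : {k : I | k \in players G'})
       (sigma' (val k) (val (s' k)) * (ind s (val k) (val (s' k)))%:R).
  by apply: eq_bigr => s' _; rewrite -indprod /W' -big_split.
rewrite (dprod_sum (fun (k : {k : I | k \in players G'}) (x : {x : A (val k) | x \in strats G' (val k)}) =>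
   sigma' (val k) (val x) * (ind s (val k) (val x))%:R)).
pose Gs j := \sum_(x in strats G' j) sigma' j x * (ind s j x)%:R.
have -> : \prod_(k : {k : I | k \in players G'})
    \sum_(x : {x : A (val k) | x \in strats G' (val k)})
       (sigma' (val k) (val x) * (ind s (val k) (val x))%:R) =
    \prod_(k : {k : I | k \in players G'}) Gs (val k).
  apply: eq_bigr => k _; rewrite /Gs; symmetry; exact: (big_sub (strats G' (val k))).
rewrite -(big_sub (players G') Gs) (bigID (fun j => j \in players G)) /=.
rewrite [X in _ = _ * X]big1 ?mulr1; last first.
  move=> j /andP [jN' jN]; rewrite /Gs /ind insubN //.
  transitivity (\sum_(x in strats G' j) sigma' j x); last exact: (proj2 (mix' j jN')).
  by apply: eq_big => // x _; rewrite mulr1.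
have -> : \prod_(j in players G' | j \in players G) Gs j = \prod_(j in players G) Gs j.
  apply: eq_bigl => j; rewrite andb_idl // => jN; exact: (subsetP subN).
rewrite [RHS]big_sub; apply: eq_bigr => -[j hj] _ /=.
rewrite /Gs /ind (insubT (fun k => k \in players G) hj) /=.
set y := sval (s (exist (fun x : I => x \in players G) j hj)).
have yS : y \in strats G j by exact: valP.
have yS' : y \in strats G' j by exact: (subsetP (subS j hj)).
rewrite (bigD1 y) //= eqxx mulr1n mulr1 big1 ?addr0.
  by apply: comp => //; exact: (subsetP subN).
by move=> x /andP [_ xy]; rewrite eq_Tagged /= (negbTE xy) mulr0.
Qed.
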